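(* Let $V=\{v_0,\dots,v_{L-1}\}$ be a set of $L\ge1$ boolean variables and let $n_0,\dots,n_t$ ($t\ge1$) be a sequence of nodes, node $n_j$ carrying a state $s_j:V\to\{0,1\}$. Let $n^c=n_t$ (child) with state $s^c=s_t$ and $n^p=n_k$ (parent) for some $k\in\{0,\dots,t-1\}$, and suppose the states of $n^p$ and $n^c$ differ in exactly $e$ variables. For a node $n=n_m$ in the sequence define $\alpha_{0:t}(n)=\frac{1}{t}\sum_{i\in\{0,\dots,t\},i\ne m}\delta(n,n_i)$ with $\delta(n_m,n_i)=\frac1L\sum_{l=0}^{L-1}\mathbf{1}_{s_m(v_l)\neq s_i(v_l)}$. Let $$\mu=\mu_{t-1}^{min}(n^c)=\min_{0\le l\le L-1}\frac{N_{t-1}^{v_l}(s^c)}{t},\qquad N_{t-1}^{v_l}(s^c)=|\{j\in\{0,\dots,t-1\}\mid s_j(v_l)=s^c(v_l)\}|.$$ Then $$\alpha_{0:t}(n^c)\le\alpha_{0:t}(n^p)+\frac{t-1}{t}\,\frac{e-2e\mu}{L}.$$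
   Context: $\delta$ is the normalized Hamming distance between node states; $\alpha_{0:t}(n)$ is the average normalized Hamming distance of a node of the sequence to all other nodes; $\mu_{t-1}^{min}(n^c)$ is the minimum, over all variables, of the fraction of the first $t$ nodes $n_0,\dots,n_{t-1}$ whose state agrees with the child's state on that variable. *)

(* Defs.v *)
From mathcomp Require Import all_boot all_order all_algebra.
Set Implicit Arguments. Unset Strict Implicit. Unset Printing Implicit Defensive.
Import Order.TTheory GRing.Theory Num.Theory.
Local Open Scope ring_scope.

(* A sequence of nodes n_0..n_t, node j having state s j : 'I_L -> bool
   (variable v_l is index l). *)

Definition delta (R : realFieldType) (L t : nat) (s : 'I_t.+1 -> 'I_L -> bool)
  (m i : 'I_t.+1) : R :=
  #|[set l : 'I_L | s m l != s i l]|%:R / L%:R.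

Definition alpha (R : realFieldType) (L t : nat) (s : 'I_t.+1 -> 'I_L -> bool)
  (m : 'I_t.+1) : R :=
  (\sum_(i < t.+1 | i != m) delta R s m i) / t%:R.

(* N_{t-1}^{v_l}(s^c) = #{ j in 0..t-1 | s_j(v_l) = s^c(v_l) }, child = n_t *)
Definition Ncount (L t : nat) (s : 'I_t.+1 -> 'I_L -> bool) (l : 'I_L) : nat :=
  #|[set j : 'I_t.+1 | (j < t)%N && (s j l == s ord_max l)]|.

(* mu_{t-1}^{min}(n^c) = min_l N_{t-1}^{v_l}(s^c) / t.  The nat minimum is
   taken with neutral element t, which is harmless since every N <= t. *)
Definition mu_min (R : realFieldType) (L t : nat) (s : 'I_t.+1 -> 'I_L -> bool) : R :=
  (\big[minn/t]_(l < L) Ncount s l)%:R / t%:R.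

(* Main.v *)
Require Import Defs.
From mathcomp Require Import all_boot all_order all_algebra.
From mathcomp Require Import zify ring lra.
Import Order.TTheory GRing.Theory Num.Theory.
Local Open Scope ring_scope.

Lemma card_ind (n : nat) (P : pred 'I_n) :
  #|[set l | P l]| = (\sum_l (P l : nat))%N.
Proof.
rewrite -sum1_card big_mkcond /=; apply: eq_bigr => l _; rewrite inE.
by case: (P l).
Qed.

Lemma min_le (L t : nat) (F : 'I_L -> nat) j : (\big[minn/t]_(l < L) F l <= F j)%N.
Proof.
have: j \in index_enum 'I_L by rewrite mem_index_enum.
elim: (index_enum 'I_L) => // a r IH; rewrite inE big_cons; case/orP.
  by move/eqP=> ->; rewrite geq_minl.
by move/IH; apply: leq_trans; rewrite geq_minr.
Qed.

Lemma neq_max (t : nat) (i : 'I_t.+1) : (i != ord_max) = (i < t)%N.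
Proof.
apply/idP/idP => H.
  have := ltn_ord i; rewrite ltnS leq_eqVlt; case/orP => // /eqP Hi.
  by case/eqP: H; apply: val_inj.
by apply/eqP => Hi; move: H; rewrite Hi /= ltnn.
Qed.

Theorem theorem5 (R : realFieldType) (L t : nat) (s : 'I_t.+1 -> 'I_L -> bool)
  (k : 'I_t.+1) (e : nat) :
  (1 <= L)%N -> (1 <= t)%N -> (k < t)%N ->
  e = #|[set l : 'I_L | s k l != s ord_max l]| ->
  alpha R s ord_max <=
    alpha R s k + (t%:R - 1) / t%:R * ((e%:R - 2 * e%:R * mu_min R s) / L%:R).
Proof.
move=> HL Ht Hk He.
set c : 'I_t.+1 := ord_max.
pose Dn i j := (\sum_l (s i l != s j l : nat))%N.
pose m := (\big[minn/t]_(l < L) Ncount s l)%N.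
have eE : e = (\sum_l (s k l != s c l : nat))%N by rewrite He card_ind.
have key : forall i, (Dn c i + 2 * \sum_l ((s k l != s c l) && (s i l == s c l) : nat)
                      = Dn k i + e)%N.
  move=> i; rewrite eE /Dn big_distrr -!big_split /=; apply: eq_bigr => l _.
  by case: (s k l); case: (s i l); case: (s c l).
have sumc : (\sum_(i < t.+1 | i != c) Dn c i
   = \sum_(i < t.+1 | (i < t)%N) Dn c i)%N by apply: eq_bigl => i; rewrite neq_max.
have sumk : (\sum_(i < t.+1 | i != k) Dn k i
   = e + \sum_(i < t.+1 | (i < t)%N) Dn k i)%N.
  have H1 : (\sum_(i < t.+1) Dn k i = Dn k k + \sum_(i < t.+1 | i != k) Dn k i)%N
    by rewrite (bigD1 k).
  have H2 : (\sum_(i < t.+1) Dn k i = Dn k c + \sum_(i < t.+1 | i != c) Dn k i)%N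
    by rewrite (bigD1 c).
  have Dkk : Dn k k = 0%N by rewrite /Dn big1 // => l _; rewrite eqxx.
  rewrite /= Dkk add0n in H1.
  have -> : \sum_(i < t.+1 | i != k) Dn k i = \sum_(i < t.+1) Dn k i by rewrite H1.
  rewrite H2 eE -/(Dn k c).
  congr (_ + _)%N; apply: eq_bigl => i; by rewrite neq_max.
have Nbound : (e * m <= \sum_(i < t.+1 | (i < t)%N)
         \sum_l ((s k l != s c l) && (s i l == s c l) : nat))%N.
  rewrite exchange_big /= eE big_distrl /=; apply: leq_sum => l _.
  have -> : (\sum_(i < t.+1 | (i < t)%N) ((s k l != s c l) && (s i l == s c l) : nat)
      = (s k l != s c l) * Ncount s l)%N.
    rewrite /Ncount card_ind big_distrr /= [LHS]big_mkcond /=; apply: eq_bigr => i _.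
    by case: (i < t)%N; case: (s k l != s c l); case: (s i l == s c l).
  by rewrite leq_mul2l min_le orbT.
have sumkey : (\sum_(i < t.+1 | i != c) Dn c i + 2 * (e * m)
       <= \sum_(i < t.+1 | i != k) Dn k i + (t - 1) * e)%N.
  rewrite sumc sumk.
  have Ce : (\sum_(i < t.+1 | (i < t)%N) e = t * e)%N.
    rewrite big_mkcond big_ord_recr /= ltnn addn0.
    rewrite (eq_bigr (fun _ => e)) ?sum_nat_const ?card_ord // => i _.
    by rewrite /= ltn_ord.
  have D2 : (\sum_(i < t.+1 | (i < t)%N) (2 * \sum_l ((s k l != s c l) && (s i l == s c l) : nat))
     = 2 * \sum_(i < t.+1 | (i < t)%N) \sum_l ((s k l != s c l) && (s i l == s c l) : nat))%N
     by rewrite big_distrr.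
  have Hs : (\sum_(i < t.+1 | (i < t)%N) Dn c i + 2 * \sum_(i < t.+1 | (i < t)%N) \sum_l ((s k l != s c l) && (s i l == s c l) : nat)
     = \sum_(i < t.+1 | (i < t)%N) Dn k i + t * e)%N.
    rewrite -Ce -D2 -!big_split; apply: eq_bigr => i _; exact: key.
  have : (t * e = e + (t - 1) * e)%N by rewrite mulnBl mul1n subnKC // leq_pmull.
  lia.
have Ha : forall x, alpha R s x = (\sum_(i < t.+1 | i != x) Dn x i)%:R / L%:R / t%:R.
  move=> x; rewrite /alpha /delta -mulr_suml natr_sum; congr (_ / _ / _).
  by apply: eq_bigr => i _; rewrite card_ind.
have Hm : mu_min R s = m%:R / t%:R by [].
rewrite Hm !Ha -/c.
move: sumkey.
set Sc := (\sum_(i < t.+1 | i != c) Dn c i)%N.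
set Sk := (\sum_(i < t.+1 | i != k) Dn k i)%N.
move=> sumkey.
have HR : (Sc%:R + 2 * e%:R * m%:R <= Sk%:R + (t%:R - 1) * e%:R :> R).
  have := sumkey; rewrite -(ler_nat R) !natrD !natrM natrB // => H.
  by move: H; lra.

have tn0 : (t%:R != 0 :> R) by rewrite pnatr_eq0 -lt0n.
have Ln0 : (L%:R != 0 :> R) by rewrite pnatr_eq0 -lt0n.
have tp : (0 < t%:R :> R) by rewrite ltr0n.
have Lp : (0 < L%:R :> R) by rewrite ltr0n.
rewrite -subr_ge0.
have -> : Sk%:R / L%:R / t%:R + (t%:R - 1) / t%:R * ((e%:R - 2 * e%:R * (m%:R / t%:R)) / L%:R)
   - Sc%:R / L%:R / t%:R
   = (L%:R)^-1 * (t%:R)^-1 * ((Sk%:R + (t%:R - 1) * e%:R - (Sc%:R + 2 * e%:R * m%:R))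
        + 2 * e%:R * m%:R * (t%:R)^-1) :> R.
  move: (tn0) (Ln0); generalize (Sk%:R : R) (Sc%:R : R) (e%:R : R) (m%:R : R) (t%:R : R) (L%:R : R) => a b x y T LL h1 h2. field.
  by rewrite tn0 Ln0.
apply: mulr_ge0; first by apply: mulr_ge0; rewrite invr_ge0 ltW.
apply: addr_ge0; first by rewrite subr_ge0.
by apply: mulr_ge0; [apply: mulr_ge0; [apply: mulr_ge0|]|rewrite invr_ge0 ltW].
Qed.
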